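(* Let $k\ge 1$ and $n>\binom{k}{2}$. If $F_1,\ldots,F_k$ are subgraphs (sets of edges) of the complete bipartite graph $K_{n,n}$ satisfying $|F_i|\ge in$ for all $i\le k$, then $(F_1,\ldots,F_k)$ has a rainbow matching, i.e. there exist pairwise disjoint edges $e_1,\ldots,e_k$ with $e_i\in F_i$ for each $i$.
   Context: A rainbow matching for $(F_1,\ldots,F_k)$ is a choice of pairwise disjoint edges $e_i\in F_i$, one from each $F_i$. *)

(* Defs.v *)
From mathcomp Require Import all_boot.
Set Implicit Arguments. Unset Strict Implicit. Unset Printing Implicit Defensive.

(* Edges of the complete bipartite graph K_{n,n}: pairs (a, b) with a in the
   left part 'I_n and b in the right part 'I_n. *)
Definition bedge (n : nat) := ('I_n * 'I_n)%type.

Definition disjoint_edges (n : nat) (e f : bedge n) : bool :=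
  (e.1 != f.1) && (e.2 != f.2).

Definition rainbow_matching (n k : nat) (F : 'I_k -> {set bedge n}) : Prop :=
  exists e : 'I_k -> bedge n,
    (forall i, e i \in F i) /\
    (forall i j, i != j -> disjoint_edges (e i) (e j)).

(* Main.v *)
Require Import Defs.
From mathcomp Require Import all_boot zify.
Set Implicit Arguments. Unset Strict Implicit. Unset Printing Implicit Defensive.

Section Aux.
Variable n : nat.

Definition rb (k : nat) (F : nat -> {set bedge n}) : Prop :=
  exists e : nat -> bedge n,
    (forall i, i < k -> e i \in F i) /\
    (forall i j, i < k -> j < k -> i != j -> disjoint_edges (e i) (e j)).

Definition drow (A : {set bedge n}) (a : 'I_n) := [set x in A | x.1 == a].
Definition dcol (A : {set bedge n}) (b : 'I_n) := [set x in A | x.2 == b].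
Definition rdel (A : {set bedge n}) (a : 'I_n) := [set x in A | x.1 != a].

Lemma disj_sym (x y : bedge n) : disjoint_edges x y = disjoint_edges y x.
Proof. by rewrite /disjoint_edges eq_sym [x.2 == _]eq_sym. Qed.

Lemma card_drow (A : {set bedge n}) a : #|drow A a| <= n.
Proof.
have sub : drow A a \subset [set pair a c | c in [set: 'I_n]].
  apply/subsetP => x; rewrite inE => /andP[_ /eqP <-].
  by apply/imsetP; exists x.2; rewrite ?inE //; case: x.
apply: leq_trans (subset_leq_card sub) _.
by apply: leq_trans (leq_imset_card _ _) _; rewrite cardsT card_ord.
Qed.

Lemma card_dcol (A : {set bedge n}) b : #|dcol A b| <= n.
Proof.
have sub : dcol A b \subset [set (c, b) | c in [set: 'I_n]].
  apply/subsetP => x; rewrite inE => /andP[_ /eqP <-].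
  by apply/imsetP; exists x.1; rewrite ?inE //; case: x.
apply: leq_trans (subset_leq_card sub) _.
by apply: leq_trans (leq_imset_card _ _) _; rewrite cardsT card_ord.
Qed.

Lemma card_rdel (A : {set bedge n}) a : #|A| = #|rdel A a| + #|drow A a|.
Proof.
rewrite -(cardsID [set x : bedge n | x.1 == a] A) addnC; congr (_ + _);
by apply: eq_card => x; rewrite !inE; case: (x \in A); rewrite ?andbF ?andbT.
Qed.

Lemma card_del2 (A : {set bedge n}) a b :
  #|A| <= #|[set x in A | (x.1 != a) && (x.2 != b)]| + #|drow A a| + #|dcol A b|.
Proof.
have sub : A \subset ([set x in A | (x.1 != a) && (x.2 != b)] :|: drow A a) :|: dcol A b.
  apply/subsetP => x xA; rewrite !inE xA /=.
  by case: (x.1 == a); case: (x.2 == b).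
apply: leq_trans (subset_leq_card sub) _.
apply: leq_trans (leq_card_setU _ _) _; rewrite leq_add2r.
exact: leq_card_setU.
Qed.

Lemma insert_rb k (F G : nat -> {set bedge n}) j (x : bedge n) (M : nat -> bedge n) :
  j <= k ->
  (forall i, i < j -> G i \subset F i) ->
  (forall i, j <= i -> i < k -> G i \subset F i.+1) ->
  x \in F j ->
  (forall i, i < k -> M i \in G i) ->
  (forall i i', i < k -> i' < k -> i != i' -> disjoint_edges (M i) (M i')) ->
  (forall i, i < k -> disjoint_edges x (M i)) ->
  rb k.+1 F.
Proof.
move=> jk sub1 sub2 xF MG Mdis xdis.
pose phi i := if i < j then i else i.-1.
exists (fun i => if i == j then x else M (phi i)); split.
  move=> i ik; case: eqP => [-> //|/eqP ij].
  rewrite /phi; case: ltnP => hij.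
    by apply: (subsetP (sub1 _ hij)); apply: MG; lia.
  have hi : j <= i.-1 by lia.
  have hk : i.-1 < k by lia.
  have := subsetP (sub2 _ hi hk) _ (MG _ hk).
  by rewrite prednK //; lia.
move=> i i' ik i'k ii'.
move/eqP: ii' => ii'.
case: eqP => [ij|ij]; case: eqP => [i'j|i'j].
- by case: ii'; rewrite ij i'j.
- apply: xdis; rewrite /phi; case: (ltnP i' j) => ?; lia.
- rewrite disj_sym; apply: xdis; rewrite /phi; case: (ltnP i j) => ?; lia.
- apply: Mdis; rewrite /phi; case: (ltnP i j) => ?; case: (ltnP i' j) => ?; try lia.
  all: apply/eqP; lia.
Qed.


Definition trE (x : bedge n) : bedge n := (x.2, x.1).
Lemma trK : involutive trE. Proof. by case. Qed.
Definition trS (A : {set bedge n}) := [set trE x | x in A].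

Lemma mem_trS A x : (x \in trS A) = (trE x \in A).
Proof.
apply/imsetP/idP => [[y yA ->]|H]; first by rewrite trK.
by exists (trE x); rewrite ?trK.
Qed.

Lemma card_trS A : #|trS A| = #|A|.
Proof. exact: card_imset (inv_inj trK). Qed.

Lemma drow_trS A b : #|drow (trS A) b| = #|dcol A b|.
Proof.
rewrite -[RHS]card_trS; apply: eq_card => x.
by rewrite [LHS]inE !mem_trS inE.
Qed.

Lemma rb_trS k (F : nat -> {set bedge n}) : rb k (fun i => trS (F i)) -> rb k F.
Proof.
move=> [e [eF edis]]; exists (fun i => trE (e i)); split.
  by move=> i ik; rewrite -mem_trS; apply: eF.
move=> i j ik jk ij; have := edis i j ik jk ij.
by rewrite /disjoint_edges /= andbC.
Qed.

Lemma stepR k s (F : nat -> {set bedge n}) j a :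
  (forall s' (G : nat -> {set bedge n}), 'C(k,2) + s' < n ->
     (forall i, i < k -> i.+1 * n <= #|G i| + s') -> rb k G) ->
  'C(k.+1,2) + s < n ->
  (forall i, i < k.+1 -> i.+1 * n <= #|F i| + s) ->
  j < k.+1 -> k < #|drow (F j) a| ->
  (forall i, i < j -> #|drow (F i) a| <= k) ->
  rb k.+1 F.
Proof.
move=> IH Hs Hsz jk Hbig Hflat.
pose G i := if i < j then rdel (F i) a else rdel (F i.+1) a.
have HC : 'C(k.+1,2) = 'C(k,2) + k by rewrite binS bin1.
have [M [MG Mdis]] : rb k G.
  apply: (IH (s + k)); first lia.
  move=> i ik; rewrite /G; case: ifP => hij.
  - have := Hsz i (leqW ik); have := card_rdel (F i) a; have := Hflat i hij; lia.
  - have := Hsz i.+1 ik; have := card_rdel (F i.+1) a; have := card_drow (F i.+1) a.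
    rewrite (mulSn i.+1); lia.
have Mrow : forall i, i < k -> (M i).1 != a.
  by move=> i ik; have := MG i ik; rewrite /G; case: ifP => _; rewrite inE => /andP[].
pose U := [set (M (nat_of_ord i)).2 | i : 'I_k].
have [x xR xU] : exists2 x, x \in drow (F j) a & x.2 \notin U.
  case: (boolP [exists x in drow (F j) a, x.2 \notin U]) => [/exists_inP[x ? ?]|/exists_inPn H].
    by exists x.
  have sub : [set y.2 | y in drow (F j) a] \subset U.
    by apply/subsetP => c /imsetP[y yR ->]; have := H y yR; rewrite negbK.
  exfalso; have := subset_leq_card sub.
  rewrite card_in_imset.
    have : #|U| <= k by apply: leq_trans (leq_imset_card _ _) _; rewrite card_ord.
    by move=> h1 h2; move: Hbig; rewrite ltnNge (leq_trans h2 h1).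
  move=> y z; rewrite !inE => /andP[_ /eqP y1] /andP[_ /eqP z1] e2.
  by case: y y1 e2 => y1' y2 /= ->; case: z z1 => z1' z2 /= -> ->.
apply: (@insert_rb k F G j x M) => //.
- move=> i ij; rewrite /G ij; apply/subsetP => y; rewrite inE => /andP[] //.
- move=> i ji ik; rewrite /G ltnNge ji /=; apply/subsetP => y; rewrite inE => /andP[] //.
- by move: xR; rewrite inE => /andP[].
- move=> i ik; rewrite /disjoint_edges.
  move: xR; rewrite inE => /andP[_ /eqP ->]; rewrite eq_sym Mrow //=.
  apply/eqP => e2; move: xU; rewrite e2; apply/negP; rewrite negbK.
  by apply/imsetP; exists (Ordinal ik).
Qed.

Lemma binle k : k <= 'C(k,2) + 1.
Proof. by case: k => // k; rewrite binS bin1; lia. Qed.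

Lemma mainL k : forall s (F : nat -> {set bedge n}), 'C(k,2) + s < n ->
  (forall i, i < k -> i.+1 * n <= #|F i| + s) -> rb k F.
Proof.
elim: k => [|k IH] s F Hs Hsz.
  have Hn : 0 < n by lia.
  by exists (fun _ => (Ordinal Hn, Ordinal Hn)); split.
have HC : 'C(k.+1,2) = 'C(k,2) + k by rewrite binS bin1.
pose bigb i := [exists a, k < #|drow (F i) a|] || [exists b, k < #|dcol (F i) b|].
case: (boolP [exists i : 'I_k.+1, bigb i]) => [/existsP[i0 Hi0] | Hnone].
  have exP : exists m, (m < k.+1) && bigb m by exists i0; rewrite ltn_ord Hi0.
  case: (ex_minnP exP) => j /andP[jk Hj] minj.
  have flat : forall i, i < j ->
      (forall a, #|drow (F i) a| <= k) /\ (forall b, #|dcol (F i) b| <= k).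
    move=> i ij; have : ~~ bigb i.
      apply/negP => bi; have := minj i; rewrite bi andbT (ltn_trans ij jk).
      by move=> /(_ isT); rewrite leqNgt ij.
    rewrite negb_or => /andP[/existsPn Ha /existsPn Hb].
    by split=> [a|b]; [have := Ha a | have := Hb b]; rewrite -leqNgt.
  case/orP: Hj => [/existsP[a Ha] | /existsP[b Hb]].
    by apply: (stepR IH Hs Hsz jk Ha) => i ij; exact: (flat i ij).1 a.
  apply: rb_trS; apply: (@stepR k s _ j b IH Hs).
  - by move=> i ik; rewrite card_trS; exact: Hsz.
  - exact: jk.
  - by rewrite drow_trS.
  - by move=> i ij; rewrite drow_trS; exact: (flat i ij).2 b.
have flat : forall i, i < k.+1 ->
    (forall a, #|drow (F i) a| <= k) /\ (forall b, #|dcol (F i) b| <= k).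
  move=> i ik; have : ~~ bigb i.
    apply/negP => bi; move/existsPn: Hnone => /(_ (Ordinal ik)) /=.
    by rewrite bi.
  rewrite negb_or => /andP[/existsPn Ha /existsPn Hb].
  by split=> [a|b]; [have := Ha a | have := Hb b]; rewrite -leqNgt.
have : 0 < #|F 0| by have := Hsz 0 isT; lia.
case/card_gt0P => e0 e0F.
pose G i := [set x in F i.+1 | (x.1 != e0.1) && (x.2 != e0.2)].
have [M [MG Mdis]] : rb k G.
  apply: (IH s); first lia.
  move=> i ik; have := Hsz i.+1 ik; have := card_del2 (F i.+1) e0.1 e0.2.
  have [f1 f2] := flat i.+1 ik; have := f1 e0.1; have := f2 e0.2.
  have := binle k; rewrite /G (mulSn i.+1); lia.
apply: (@insert_rb k F G 0 e0 M) => //.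
- by move=> i _ ik; apply/subsetP => y; rewrite inE => /andP[].
- move=> i ik; have := MG i ik; rewrite inE => /andP[_ /andP[h1 h2]].
  by rewrite /disjoint_edges eq_sym h1 eq_sym h2.
Qed.

End Aux.

Unset Implicit Arguments.

Theorem theorem10p3 (k n : nat) (F : 'I_k -> {set bedge n}) :
  1 <= k -> 'C(k, 2) < n ->
  (forall i : 'I_k, i.+1 * n <= #|F i|) ->
  rainbow_matching F.
Proof.
case: k F => [|k] F // _ Hn Hsz.
pose G (i : nat) := F (inord i).
have [e [eG edis]] : rb k.+1 G.
  apply: (@mainL n k.+1 0); first by rewrite addn0.
  by move=> i ik; rewrite addn0 /G; have := Hsz (inord i); rewrite inordK.
exists (fun i => e i); split.
  by move=> i; have := eG i (ltn_ord i); rewrite /G inord_val.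
by move=> i j ij; apply: edis.
Qed.
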